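(* For every process $p$ of any LTS and every closed $\varphi\in\mathrm{sHML}$, the following are equivalent: (i) $p\in[\![\varphi]\!]_B$; (ii) every finfinite trace $g$ produced by $p$ satisfies $g\in[\![\varphi]\!]_F$.
   Context: Fix a finite set $\mathrm{Act}$ of actions, $\tau\notin\mathrm{Act}$. $\mathrm{sHML}$: $\varphi::=\mathrm{tt}\mid\mathrm{ff}\mid[A]\varphi\mid\varphi\wedge\varphi\mid\max X.\varphi\mid X$ ($A\subseteq\mathrm{Act}$, guarded). Branching-time semantics over an LTS $(\mathrm{Proc},\mathrm{Act}\cup\{\tau\},\to)$, with $p\overset{a}{\Longrightarrow}q$ iff $p(\xrightarrow{\tau})^*\xrightarrow{a}(\xrightarrow{\tau})^*q$: $[\![\mathrm{tt}]\!]_B=\mathrm{Proc}$, $[\![\mathrm{ff}]\!]_B=\emptyset$, $\wedge$ is intersection, $[\![[A]\varphi,\rho]\!]_B=\{p\mid\forall a\in A,\forall q.\ p\overset{a}{\Longrightarrow}q\Rightarrow q\in[\![\varphi,\rho]\!]_B\}$, $[\![\max X.\varphi,\rho]\!]_B=\bigcup\{S\mid S\subseteq[\![\varphi,\rho[X\mapsto S]]\!]_B\}$, $[\![X,\rho]\!]_B=\rho(X)$. Finfinite traces $\mathrm{Fin}=\mathrm{Act}^\omega\cup\mathrm{Act}^*$; finfinite semantics: $[\![\mathrm{tt}]\!]_F=\mathrm{Fin}$, $[\![\mathrm{ff}]\!]_F=\emptyset$, $\wedge$ intersection, $[\![[A]\varphi,\sigma]\!]_F=\{g\mid\forall a\in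 A,\forall g'.\ g=ag'\Rightarrow g'\in[\![\varphi,\sigma]\!]_F\}$ (so the empty trace satisfies every $[A]\varphi$), $[\![\max X.\varphi,\sigma]\!]_F=\bigcup\{S\subseteq\mathrm{Fin}\mid S\subseteq[\![\varphi,\sigma[X\mapsto S]]\!]_F\}$, $[\![X,\sigma]\!]_F=\sigma(X)$. A process $p$ produces a finite trace $s\in\mathrm{Act}^*$ if $p\overset{s}{\Longrightarrow}q$ for some $q$ (composition of weak steps), and produces an infinite trace $a_1a_2\cdots$ if there are $p=p_0,p_1,\ldots$ with $p_{i-1}\overset{a_i}{\Longrightarrow}p_i$ for all $i\ge1$. *)

(* Defs.v *)
From mathcomp Require Import all_boot.
From Stdlib Require Import Relations.
Set Implicit Arguments. Unset Strict Implicit. Unset Printing Implicit Defensive.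

Inductive shml (Act : finType) : Type :=
| Stt
| Sff
| Sbox of {set Act} & shml Act
| Sand of shml Act & shml Act
| Smax of nat & shml Act
| Svar of nat.
Arguments Stt {Act}. Arguments Sff {Act}. Arguments Svar {Act}.

Fixpoint fv (Act : finType) (phi : shml Act) : seq nat :=
  match phi with
  | Stt | Sff => [::]
  | Sbox _ psi => fv psi
  | Sand psi chi => fv psi ++ fv chi
  | Smax X psi => filter (fun Y => Y != X) (fv psi)
  | Svar X => [:: X]
  end.

Definition shml_closed (Act : finType) (phi : shml Act) : Prop := fv phi = [::].

Fixpoint guarded_in (Act : finType) (X : nat) (phi : shml Act) : bool :=
  match phi with
  | Stt | Sff => true
  | Sbox _ _ => true
  | Sand psi chi => guarded_in X psi && guarded_in X chi
  | Smax Y psi => (Y == X) || guarded_in X psi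
  | Svar Y => Y != X
  end.

Fixpoint guarded (Act : finType) (phi : shml Act) : bool :=
  match phi with
  | Stt | Sff | Svar _ => true
  | Sbox _ psi => guarded psi
  | Sand psi chi => guarded psi && guarded chi
  | Smax X psi => guarded_in X psi && guarded psi
  end.

Definition upd (T : Type) (rho : nat -> T -> Prop) (X : nat) (S : T -> Prop)
  : nat -> T -> Prop := fun Y => if Y == X then S else rho Y.

(* LTS over Act ∪ {τ}: labels are option Act, with None = τ. *)
Section LTS.
Variables (Act : finType) (Proc : Type) (step : Proc -> option Act -> Proc -> Prop).

Definition tau_step (p q : Proc) : Prop := step p None q.

Definition wstep (p : Proc) (a : Act) (q : Proc) : Prop :=
  exists p1 p2, clos_refl_trans Proc tau_step p p1 /\ step p1 (Some a) p2 /\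
                clos_refl_trans Proc tau_step p2 q.

Fixpoint wsteps (p : Proc) (s : seq Act) (q : Proc) : Prop :=
  match s with
  | [::] => p = q
  | a :: s' => exists r, wstep p a r /\ wsteps r s' q
  end.

Fixpoint semB (phi : shml Act) (rho : nat -> Proc -> Prop) : Proc -> Prop :=
  match phi with
  | Stt => fun _ => True
  | Sff => fun _ => False
  | Sbox A psi => fun p => forall a, a \in A -> forall q, wstep p a q -> semB psi rho q
  | Sand psi chi => fun p => semB psi rho p /\ semB chi rho p
  | Smax X psi => fun p => exists S : Proc -> Prop,
                    S p /\ (forall q, S q -> semB psi (upd rho X S) q)
  | Svar X => rho X
  end.
End LTS.

(* finfinite traces Act^* ∪ Act^ω *)
Inductive fin_trace (Act : Type) : Type :=
| Tfin of seq Act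
| Tinf of (nat -> Act).

Definition tcons (Act : Type) (a : Act) (g : fin_trace Act) : fin_trace Act :=
  match g with
  | Tfin s => Tfin (a :: s)
  | Tinf f => Tinf (fun n => match n with 0 => a | k.+1 => f k end)
  end.

Fixpoint semF (Act : finType) (phi : shml Act) (sigma : nat -> fin_trace Act -> Prop)
  : fin_trace Act -> Prop :=
  match phi with
  | Stt => fun _ => True
  | Sff => fun _ => False
  | Sbox A psi => fun g => forall a, a \in A -> forall g', g = tcons a g' -> semF psi sigma g'
  | Sand psi chi => fun g => semF psi sigma g /\ semF chi sigma g
  | Smax X psi => fun g => exists S : fin_trace Act -> Prop,
                    S g /\ (forall g', S g' -> semF psi (upd sigma X S) g')
  | Svar X => sigma X
  end.

Definition produces (Act : finType) (Proc : Type)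
  (step : Proc -> option Act -> Proc -> Prop) (p : Proc) (g : fin_trace Act) : Prop :=
  match g with
  | Tfin s => exists q, wsteps step p s q
  | Tinf f => exists ps : nat -> Proc, ps 0 = p /\ forall i, wstep step (ps i) (f i) (ps i.+1)
  end.

(* closed formulas: the environment is irrelevant; use the empty one *)
Definition semB_closed (Act : finType) (Proc : Type)
  (step : Proc -> option Act -> Proc -> Prop) (phi : shml Act) : Proc -> Prop :=
  semB step phi (fun _ _ => False).
Definition semF_closed (Act : finType) (phi : shml Act) : fin_trace Act -> Prop :=
  semF phi (fun _ _ => False).

(* Main.v *)
Require Import Defs.
From mathcomp Require Import all_boot.

Section Aux.
Variables (Act : finType) (Proc : Type) (step : Proc -> option Act -> Proc -> Prop).

Lemma prod_inv p a g g' : produces step p g -> g = tcons a g' ->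
  exists q, wstep step p a q /\ produces step q g'.
Proof.
case: g' => [s|f] /=.
- case: g => [s'|f'] //= [q Hq] [E]; subst s'. case: Hq => r [H1 H2]. by exists r; split => //; exists q.
- case: g => [s'|f'] //= [ps [H0 Hs]] [Hf].
  have Ha : f' 0 = a by rewrite Hf.
  have Hi : forall i, f' i.+1 = f i by move=> i; rewrite Hf.
  exists (ps 1); split.
  + by rewrite -H0 -Ha.
  + exists (fun n => ps n.+1); split => // i.
    by rewrite -Hi.
Qed.

Lemma prod_cons p a q g : wstep step p a q -> produces step q g ->
  produces step p (tcons a g).
Proof.
case: g => [s|f] /= Hw.
- by case=> r Hr; exists r; exists q.
- case=> ps [H0 Hs]. exists (fun n => match n with 0 => p | k.+1 => ps k end).
  split => // [[|i]] /=; first by rewrite H0. exact: Hs.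
Qed.

Lemma semF_mono (phi : shml Act) : forall s1 s2 g,
  (forall Y h, s1 Y h -> s2 Y h) -> semF phi s1 g -> semF phi s2 g.
Proof.
elim: phi => [|| A psi IH | psi IH1 chi IH2 | X psi IH | X] s1 s2 g Hs /=.
- done. - done.
- move=> H a Ha g' E; exact: (IH s1 s2 _ Hs (H a Ha g' E)).
- by case=> H1 H2; split; [exact: (IH1 s1 s2 _ Hs)|exact: (IH2 s1 s2 _ Hs)].
- case=> S [HS Hp]; exists S; split => // g' Hg'.
  apply: (IH (upd s1 X S)); last exact: Hp.
  by move=> Y h; rewrite /upd; case: (Y == X) => //; apply: Hs.
- exact: Hs.
Qed.

Lemma dir1 (phi : shml Act) : forall rho sigma p,
  (forall X q, rho X q -> forall g, produces step q g -> sigma X g) ->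
  semB step phi rho p -> forall g, produces step p g -> semF phi sigma g.
Proof.
elim: phi => [|| A psi IH | psi IH1 chi IH2 | X psi IH | X] rho sigma p Hc /=.
- done. - done.
- move=> H g Hg a Ha g' E.
  have [q [Hw Hq]] := @prod_inv p a g g' Hg E.
  exact: (IH rho sigma q Hc (H a Ha q Hw)).
- by case=> H1 H2 g Hg; split; [exact: (IH1 rho sigma p)|exact: (IH2 rho sigma p)].
- case=> S [HS Hp] g Hg.
  exists (fun h => exists q, S q /\ produces step q h); split; first by exists p.
  move=> g' [q [Sq Hq]].
  apply: (IH (upd rho X S)); last exact: Hq; last exact: Hp.
  move=> Y r; rewrite /upd; case: (Y == X); last exact: Hc.
  by move=> Sr h Hh; exists r.
- move=> H g Hg; exact: (Hc X p H g Hg).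
Qed.

Lemma dir2 (phi : shml Act) : forall rho sigma p,
  (forall X q, (forall g, produces step q g -> sigma X g) -> rho X q) ->
  (forall g, produces step p g -> semF phi sigma g) -> semB step phi rho p.
Proof.
elim: phi => [|| A psi IH | psi IH1 chi IH2 | X psi IH | X] rho sigma p Hc /= H.
- done.
- apply: (H (Tfin [::])). by exists p.
- move=> a Ha q Hw; apply: (IH rho sigma q Hc) => g Hg.
  exact: (H _ (@prod_cons p a q g Hw Hg) a Ha g erefl).
- split; [apply: (IH1 rho sigma p Hc) | apply: (IH2 rho sigma p Hc)];
  by move=> g Hg; case: (H g Hg).
- pose T := fun h => exists S : fin_trace Act -> Prop,
     S h /\ (forall g', S g' -> semF psi (upd sigma X S) g').
  have Tpost : forall h, T h -> semF psi (upd sigma X T) h.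
    move=> h [S [Sh Hp]]; apply: (@semF_mono psi (upd sigma X S)); last exact: Hp.
    move=> Y k; rewrite /upd; case: (Y == X) => // Sk.
    by exists S.
  exists (fun q => forall g, produces step q g -> T g); split; first exact: H.
  move=> q Hq; apply: (IH _ (upd sigma X T)).
  + move=> Y r; rewrite /upd; case: (Y == X) => //; exact: Hc.
  + by move=> g Hg; apply: Tpost; apply: Hq.
- exact: Hc.
Qed.
End Aux.

Theorem mainTheorem17 (Act : finType) (Proc : Type)
  (step : Proc -> option Act -> Proc -> Prop) (p : Proc) (phi : shml Act) :
  shml_closed phi -> guarded phi ->
  (semB_closed step phi p <->
   (forall g : fin_trace Act, produces step p g -> semF_closed phi g)).
Proof.
move=> _ _; split.
- apply: dir1 => //.
- apply: dir2 => X q H. exact: (H (Tfin [::]) (ex_intro _ q erefl)).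
Qed.
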